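(* Let $n\ge 6$ and let $K$ be a $2$-dimensional shifted simplicial complex on vertex set $[n]$ with $K\subseteq \Delta(5,n)$. Then $f_2(K)\le 4f_1(K)-8<4f_1(K)$.
   Context: A simplicial complex on vertex set $[n]=\{1,\dots,n\}$ is a nonempty family of subsets of $[n]$ closed under taking subsets; $f_i(K)$ is the number of its members of cardinality $i+1$. $K$ is shifted if for every $F\in K$, every $i\in F$ and every $j<i$ with $j\notin F$, also $(F\setminus\{i\})\cup\{j\}\in K$. For $m\le n$, $\Delta(m,n)$ denotes the pure $(m-1)$-dimensional simplicial complex on $[n]$ whose maximal simplices are exactly the sets $S\subseteq[n]$ with $|S|=m$ such that for every $k\in[n]$: if $k\notin S$ then $\{k+1,k+2,\dots,m-k+2\}\subseteq S$ (the interval being empty when $k+1>m-k+2$). So $\Delta(5,n)$ has maximal simplices the $5$-sets $S$ with ($1\notin S\Rightarrow\{2,\dots,6\}\subseteq S$), ($2\notin S\Rightarrow \{3,4,5\}\subseteq S$), ($3\notin S\Rightarrow 4\in S$). *)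

(* Defs.v *)
(* Vertex set [n] = {1,...,n} is represented by 'I_n,
   the ordinal i : 'I_n standing for the vertex with label i+1
   (so the order on 'I_n is the order on labels). *)
From mathcomp Require Import all_boot all_order.
Set Implicit Arguments. Unset Strict Implicit. Unset Printing Implicit Defensive.

Definition simplicial_complex n (K : {set {set 'I_n}}) : Prop :=
  K != set0 /\ forall F G : {set 'I_n}, F \in K -> G \subset F -> G \in K.

Definition fvec n (K : {set {set 'I_n}}) (i : nat) : nat :=
  #|[set F in K | #|F| == i.+1]|.

Definition has_dim n (K : {set {set 'I_n}}) (d : nat) : Prop :=
  (exists2 F, F \in K & #|F| = d.+1) /\ (forall F, F \in K -> #|F| <= d.+1).

Definition shifted n (K : {set {set 'I_n}}) : Prop :=
  forall (F : {set 'I_n}) (i j : 'I_n),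
    F \in K -> i \in F -> j < i -> j \notin F -> (F :\ i) :|: [set j] \in K.

(* Maximal simplices of Delta(m,n): m-sets S such that for every vertex k
   (label k+1) not in S, every label l with (k+1)+1 <= l <= m-(k+1)+2 is
   (a vertex, i.e. l <= n, and) in S. Labels l are at most m+2. *)
Definition Delta_facet (m n : nat) (S : {set 'I_n}) : bool :=
  (#|S| == m) &&
  [forall k : 'I_n, (k \notin S) ==>
     [forall l : 'I_(m.+3),
        ((k.+2 <= l) && (l <= m + 2 - k.+1)) ==>
          [exists x : 'I_n, (x.+1 == l) && (x \in S)]]].

Definition Delta (m n : nat) : {set {set 'I_n}} :=
  [set F : {set 'I_n} | [exists S : {set 'I_n}, Delta_facet m S && (F \subset S)]].

(* Main.v *)
Require Import Defs.
From mathcomp Require Import all_boot all_order.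
From mathcomp Require Import zify.
Set Implicit Arguments. Unset Strict Implicit. Unset Printing Implicit Defensive.

Lemma facet_small n (S : {set 'I_n}) : 6 <= n -> Delta_facet 5 S ->
  2 < #|S :&: [set x : 'I_n | x < 4]|.
Proof.
move=> hn /andP[_ /forallP H].
have get : forall (k : 'I_n) (l : 'I_8), k \notin S -> k.+2 <= l -> l <= 5 + 2 - k.+1 ->
   exists2 x : 'I_n, x.+1 = l & x \in S.
  move=> k l kS h1 h2; have := H k; rewrite kS /= => /forallP /(_ l).
  rewrite h1 h2 /= => /existsP [x /andP[/eqP hx xS]]; by exists x.
have h0 : 0 < n by lia. have h1 : 1 < n by lia. have h2 : 2 < n by lia.
pose z0 : 'I_n := Ordinal h0.
pose z1 : 'I_n := Ordinal h1.
pose z2 : 'I_n := Ordinal h2.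
have get' : forall (k : 'I_n) (l : nat) (hl : l < 8), k \notin S -> k.+2 <= l -> l <= 5 + 2 - k.+1 ->
   exists2 x : 'I_n, x.+1 = l & x \in S.
  by move=> k l hl; apply: (get k (Ordinal hl)).
apply/card_gt2P.
have ne : forall x y : 'I_n, nat_of_ord x <> nat_of_ord y -> x != y.
  by move=> x y hxy; apply/eqP => exy; apply: hxy; rewrite exy.
case: (boolP (z0 \in S)) => S0; last first.
  have [x hx xS] := get' z0 2 isT S0 isT isT.
  have [y hy yS] := get' z0 3 isT S0 isT isT.
  have [w hw wS] := get' z0 4 isT S0 isT isT.
  exists x, y, w; rewrite !inE xS yS wS /=; split; [split; try lia| split; try done; try (apply: ne; simpl; lia)].
case: (boolP (z1 \in S)) => S1; last first.
  have [y hy yS] := get' z1 3 isT S1 isT isT.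
  have [w hw wS] := get' z1 4 isT S1 isT isT.
  exists z0, y, w; rewrite !inE S0 yS wS /=; split; [split; try lia| split; try done; try (apply: ne; simpl; lia)].
case: (boolP (z2 \in S)) => S2; last first.
  have [w hw wS] := get' z2 4 isT S2 isT isT.
  exists z0, z1, w; rewrite !inE S0 S1 wS /=; split; [split; try lia| split; try done; try (apply: ne; simpl; lia)].
exists z0, z1, z2; rewrite !inE S0 S1 S2 /=; split; [split; try lia| split; try done; try (apply: ne; simpl; lia)].
Qed.

Lemma delta_small n (F : {set 'I_n}) : 6 <= n -> F \in Delta 5 n -> #|F| = 3 ->
  exists2 x, x \in F & x < 4.
Proof.
move=> hn; rewrite inE => /existsP [S /andP[fS FS]] cF.
case: (boolP [exists x in F, x < 4]) => [/existsP[x /andP[? ?]]|]; first by exists x.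
rewrite negb_exists => /forallP Hn.
have c5 : #|S| = 5 by case/andP: fS => /eqP.
have := cardsID [set x : 'I_n | x < 4] S.
have h1 := facet_small hn fS.
have : #|F| <= #|S :\: [set x : 'I_n | x < 4]|.
  apply: subset_leq_card; apply/subsetP => x xF; rewrite !inE (subsetP FS x xF) andbT.
  by have := Hn x; rewrite xF.
move=> hF hID. set A := #|S :&: _| in h1 hID. set B := #|S :\: _| in hF hID. rewrite cF in hF. rewrite c5 in hID. exfalso; lia.
Qed.

Lemma arith t e : t <= (e-2)*4 -> 2 <= e -> t + 8 <= 4*e /\ t < 4*e.
Proof. lia. Qed.

Theorem lemma1p14 (n : nat) (K : {set {set 'I_n}}) :
  6 <= n ->
  simplicial_complex K -> has_dim K 2 -> shifted K ->
  K \subset Delta 5 n ->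
  fvec K 2 + 8 <= 4 * fvec K 1 /\ fvec K 2 < 4 * fvec K 1.
Proof.
move=> hn [K0 Kcl] [[F FK cF] _] Ksh KD.
have h0 : 0 < n by lia. have h1 : 1 < n by lia.
pose z0 : 'I_n := Ordinal h0.
pose z1 : 'I_n := Ordinal h1.
have [a [c [aF cF' ac c2]]] : exists a c, [/\ a \in F, c \in F, a != c & 1 < c].
  have : 2 < #|F| by rewrite cF.
  move/card_gt2P => [x [y [z [[xF yF zF] [xy yz zx]]]]].
  move: xy yz zx; rewrite -!val_eqE /= => xy yz zx.
  case: (ltnP 1 x) => hx; first by exists y, x; split => //; rewrite -val_eqE /=; lia.
  case: (ltnP 1 y) => hy; first by exists x, y; split => //; rewrite -val_eqE /=; lia.
  exists x, z; split => //; rewrite -?val_eqE /=; lia.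
pose e0 := [set z0; c].
pose e1 := [set z0; z1].
have z0c : z0 != c by rewrite -val_eqE /=; lia.
have e0K : e0 \in K.
  case: (eqVneq a z0) => [az|az].
    apply: (Kcl F) => //; apply/subsetP => x; rewrite !inE => /orP[]/eqP-> //.
    by rewrite -az.
  have acK : [set a; c] \in K.
    by apply: (Kcl F) => //; apply/subsetP => x; rewrite !inE => /orP[]/eqP->.
  have := Ksh _ a z0 acK.
  have -> : ([set a; c] :\ a) :|: [set z0] = e0.
    apply/setP => x; rewrite !inE.
    case: (eqVneq x a) => [->|xa] /=; first by rewrite (negbTE ac) orbF.
    by rewrite orbC.
  apply; first by rewrite !inE eqxx.
    by move: az; rewrite -val_eqE /=; lia.
  by rewrite !inE negb_or eq_sym az.
have e1K : e1 \in K.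
  have := Ksh _ c z1 e0K.
  have -> : (e0 :\ c) :|: [set z1] = e1.
    apply/setP => x; rewrite !inE.
    case: (eqVneq x c) => [->|xc] /=; first by rewrite [c == z0]eq_sym (negbTE z0c).
    by rewrite orbF.
  apply; first by rewrite !inE eqxx orbT.
    by rewrite /=; lia.
  rewrite !inE negb_or; apply/andP; split; rewrite -val_eqE /=; lia.
have e01 : e0 != e1.
  apply/negP => /eqP e.
  have : c \in e0 by rewrite !inE eqxx orbT.
  by rewrite e !inE => /orP[]/eqP/(congr1 val)/=; lia.
have z0e0 : z0 \in e0 by rewrite !inE eqxx.
have z0e1 : z0 \in e1 by rewrite !inE eqxx.
pose E := [set G in K | #|G| == 2].
pose T := [set G in K | #|G| == 3].
change (#|T| + 8 <= 4 * #|E| /\ #|T| < 4 * #|E|).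
have e0E : e0 \in E by rewrite inE e0K cards2 z0c.
have e1E : e1 \in E.
  rewrite inE e1K cards2; have -> : z0 != z1 by rewrite -val_eqE. by [].
pose mn (G : {set 'I_n}) := [arg min_(x < odflt z0 [pick y in G] | x \in G) val x].
have mnP : forall (G : {set 'I_n}) (y : 'I_n), y \in G -> mn G \in G /\ forall x, x \in G -> mn G <= x.
  move=> G y yG; rewrite /mn; case: pickP => [w wG|/(_ y)]; last by rewrite yG.
  rewrite /=; case: (arg_minnP (fun x : 'I_n => val x) wG) => m mG Hm; split => //.
pose f (G : {set 'I_n}) : {set 'I_n} * 'I_4 := (G :\ mn G, inord (mn G)).
have small : forall G, G \in T -> mn G < 4 /\ mn G \in G /\ forall x, x \in G -> mn G <= x.
  move=> G; rewrite inE => /andP[GK /eqP cG].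
  have [x xG x4] := delta_small hn (subsetP KD G GK) cG.
  have [mG Hm] := mnP G x xG. split; last by split. exact: leq_ltn_trans (Hm x xG) x4.
have finj : {in T &, injective f}.
  move=> G1 G2 /small [m1 [mG1 H1]] /small [m2 [mG2 H2]] [e12 em].
  have emm : mn G1 = mn G2.
    by apply: val_inj; move: (congr1 val em); rewrite /= !inordK.
  by rewrite -(setD1K mG1) -(setD1K mG2) e12 emm.
have hsub : f @: T \subset setX (E :\: [set e0; e1]) [set: 'I_4].
  apply/subsetP => p /imsetP [G GT ->].
  have [m4 [mG Hm]] := small G GT.
  move: GT; rewrite inE => /andP[GK /eqP cG].
  rewrite in_setX in_setT andbT in_setD; apply/andP; split.
    have nz : z0 \notin G :\ mn G.
      rewrite !inE; apply/negP => /andP[zm zG]; have := Hm _ zG.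
      by rewrite leqn0 => /eqP m0; move: zm; rewrite -val_eqE /= m0.
    rewrite !inE negb_or; apply/andP; split; apply/negP => /eqP e; move: nz; rewrite e.
      by rewrite z0e0.
    by rewrite z0e1.
  rewrite inE (Kcl G) ?subD1set //; apply/eqP; move: cG; rewrite (cardsD1 (mn G)) mG add1n => -[->] //.
have cT : #|T| <= (#|E| - 2) * 4.
  rewrite -(card_in_imset finj). apply: leq_trans (subset_leq_card hsub) _.
  rewrite cardsX cardsT card_ord cardsD (setIidPr _) ?cards2 ?e01 //.
  by apply/subsetP => x /set2P[]->.
have cE : 2 <= #|E|.
  have : [set e0; e1] \subset E by apply/subsetP => x /set2P[]->.
  by move/subset_leq_card; rewrite cards2 e01.
exact: arith cT cE.
Qed.
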